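(* Let $\mathfrak{sl}_2[x,y] := \mathfrak{sl}_2 \otimes_{\mathbb{C}} \mathbb{C}[x,y]$ be the complex Lie algebra of $\mathfrak{sl}_2$-valued polynomials in two commuting variables $x,y$, with bracket $[\xi,\eta](x,y)=[\xi(x,y),\eta(x,y)]$. Consider the Lie algebra $2$-cochain $$c(\xi,\eta) := \operatorname{Tr}\big(\partial_x\xi\,\partial_y\eta - \partial_y\xi\,\partial_x\eta\big)\big|_{x=y=0}, \qquad \xi,\eta\in\mathfrak{sl}_2[x,y].$$ Then $c$ is a $2$-cocycle, and the cup-square of its class in $H^2(\mathfrak{sl}_2[x,y];\mathbb{C})$ is zero in $H^4(\mathfrak{sl}_2[x,y];\mathbb{C})$.
   Context: Lie algebra cohomology is taken with trivial coefficients $\mathbb{C}$ (Chevalley–Eilenberg cohomology), with its cup product. $\partial_x,\partial_y$ denote partial derivatives applied entrywise, $\operatorname{Tr}$ is the trace of $2\times 2$ matrices. *)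

(* Defs.v *)
From HB Require Import structures.
From mathcomp Require Import all_boot all_order all_algebra.
From mathcomp Require Import complex.
From mathcomp Require Import reals.
Set Implicit Arguments. Unset Strict Implicit. Unset Printing Implicit Defensive.
Import Order.TTheory GRing.Theory Num.Theory.
Local Open Scope ring_scope.

Section SL2XY.
Variable R : realType.

Definition CC : Type := R[i].
HB.instance Definition _ := GRing.Field.on CC.

(* C[x,y] as {poly {poly C}}: the inner variable is x, the outer variable is y *)
Definition Pxy : Type := {poly {poly CC}}.

(* gl2[x,y] = 2x2 matrices over C[x,y]; sl2[x,y] = the traceless ones *)
Definition Mxy : Type := 'M[{poly {poly CC}}]_2.

Definition in_sl2 (X : 'M[{poly {poly CC}}]_2) : Prop := \tr X = 0.

Definition cscale (a : CC) (X : 'M[{poly {poly CC}}]_2) : 'M[{poly {poly CC}}]_2 :=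
  (a%:P)%:P *: X.

Definition lbr (X Y : 'M[{poly {poly CC}}]_2) : 'M[{poly {poly CC}}]_2 :=
  X *m Y - Y *m X.

Definition dx (X : 'M[{poly {poly CC}}]_2) : 'M[{poly {poly CC}}]_2 :=
  map_mx (map_poly (@deriv CC)) X.
Definition dy (X : 'M[{poly {poly CC}}]_2) : 'M[{poly {poly CC}}]_2 :=
  map_mx (@deriv {poly CC}) X.

Definition ev0 (p : {poly {poly CC}}) : CC := (p.[0]).[0].

(* n-cochains are represented by functions on lists of elements of gl2[x,y];
   only their values on lists of length n of traceless matrices matter. *)
Definition all_sl2 (s : seq 'M[{poly {poly CC}}]_2) : Prop :=
  forall k, (k < size s)%N -> in_sl2 (nth 0 s k).

Definition is_cochain (n : nat) (f : seq 'M[{poly {poly CC}}]_2 -> CC) : Prop :=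
  (forall (s : seq 'M[{poly {poly CC}}]_2) (k : nat) (a : CC) (v w : 'M[{poly {poly CC}}]_2),
      size s = n -> all_sl2 s -> (k < n)%N -> in_sl2 v -> in_sl2 w ->
      f (set_nth 0 s k (cscale a v + w)) =
        a * f (set_nth 0 s k v) + f (set_nth 0 s k w)) /\
  (forall (s : seq 'M[{poly {poly CC}}]_2) (i j : nat),
      size s = n -> all_sl2 s -> (i < j)%N -> (j < n)%N ->
      nth 0 s i = nth 0 s j -> f s = 0).

Definition drop2 (s : seq 'M[{poly {poly CC}}]_2) (i j : nat) : seq 'M[{poly {poly CC}}]_2 :=
  [seq nth 0 s k | k <- iota 0 (size s) & (k != i) && (k != j)].

Definition CEd (f : seq 'M[{poly {poly CC}}]_2 -> CC) (s : seq 'M[{poly {poly CC}}]_2) : CC :=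
  \sum_(i < size s) \sum_(j < size s | (i < j)%N)
     (-1) ^+ (i + j) * f (lbr (nth 0 s i) (nth 0 s j) :: drop2 s i j).

(* cup product of a p-cochain a and a q-cochain b (sum over (p,q)-shuffles):
   (a \cup b)(v_0..v_{p+q-1}) = sum_{I, #I = p} sgn(I) a(v_I) b(v_{complement I}) *)
Definition cup (p q : nat) (a b : seq 'M[{poly {poly CC}}]_2 -> CC)
    (s : seq 'M[{poly {poly CC}}]_2) : CC :=
  \sum_(I : {set 'I_(p + q)} | #|I| == p)
     (-1) ^+ ((\sum_(i in I) (i : nat)) - 'C(p, 2))%N *
     a (map (fun i : 'I_(p + q) => nth 0 s i) (enum I)) *
     b (map (fun i : 'I_(p + q) => nth 0 s i) (enum (~: I))).

Definition c2 (X Y : 'M[{poly {poly CC}}]_2) : CC :=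
  ev0 (\tr (dx X *m dy Y - dy X *m dx Y)).

Definition c_cochain (s : seq 'M[{poly {poly CC}}]_2) : CC :=
  c2 (nth 0 s 0) (nth 0 s 1).

End SL2XY.

(* Main.v *)
Require Import Defs.
From HB Require Import structures.
From mathcomp Require Import all_boot all_order all_algebra.
From mathcomp Require Import complex.
From mathcomp Require Import reals.
From mathcomp Require Import ring zify.
Import Order.TTheory GRing.Theory Num.Theory.
Local Open Scope ring_scope.

Section H.
Variable R : realType.
Local Notation C := (CC R).
Local Notation M := 'M[{poly {poly C}}]_2.

Definition co (p q : nat) (X : M) : 'M[C]_2 := \matrix_(i, j) ((X i j)`_q)`_p.

Lemma coD p q (X Y : M) : co p q (X + Y) = co p q X + co p q Y.
Proof. by apply/matrixP => i j; rewrite !mxE !coefD. Qed.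
Lemma coN p q (X : M) : co p q (- X) = - co p q X.
Proof. by apply/matrixP => i j; rewrite !mxE !coefN. Qed.
Lemma coB p q (X Y : M) : co p q (X - Y) = co p q X - co p q Y.
Proof. by rewrite coD coN. Qed.
Lemma co_cscale p q a (X : M) : co p q (cscale a X) = a *: co p q X.
Proof. by apply/matrixP => i j; rewrite !mxE !coefCM. Qed.

Lemma coefM2 (P Q : {poly {poly C}}) p q : ((P*Q)`_q)`_p =
  \sum_(i < q.+1) \sum_(j < p.+1) ((P`_i)`_j) * ((Q`_(q - i))`_(p - j)).
Proof. rewrite coefM coef_sum; apply eq_bigr => i _; by rewrite coefM. Qed.

Lemma co_mul p q (X Y : M) : co p q (X *m Y) =
  \sum_(i < q.+1) \sum_(j < p.+1) (co j i X *m co (p - j) (q - i) Y).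
Proof.
apply/matrixP => r t; rewrite !mxE coef_sum coef_sum summxE.
under eq_bigr do rewrite coefM2.
under [RHS]eq_bigr do rewrite summxE.
under [RHS]eq_bigr do under eq_bigr do rewrite mxE.
rewrite exchange_big; apply eq_bigr => i _.
rewrite exchange_big; apply eq_bigr => j _.
by apply eq_bigr => k _; rewrite !mxE.
Qed.

Lemma c2E (X Y : M) : c2 X Y = \tr (co 1 0 X *m co 0 1 Y - co 0 1 X *m co 1 0 Y).
Proof.
have ev : forall N : M, ev0 (\tr N) = \tr (co 0 0 N).
  move=> N; rewrite /ev0 !horner_coef0 /mxtrace coef_sum coef_sum.
  by apply eq_bigr => i _; rewrite mxE.
have m00 : forall A B : M, co 0 0 (A *m B) = co 0 0 A *m co 0 0 B.
  by move=> A B; rewrite co_mul !big_ord1.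
have hx : co 0 0 (dx X) = co 1 0 X.
  by apply/matrixP => i j; rewrite !mxE coef_map_id0 ?deriv0 // coef_deriv mulr1n.
have hy : forall Z : M, co 0 0 (dy Z) = co 0 1 Z.
  by move=> Z; apply/matrixP => i j; rewrite !mxE coef_deriv mulr1n.
have hx' : co 0 0 (dx Y) = co 1 0 Y.
  by apply/matrixP => i j; rewrite !mxE coef_map_id0 ?deriv0 // coef_deriv mulr1n.
by rewrite /c2 ev coB !m00 hx hx' !hy.
Qed.

Definition brk (A B : 'M[C]_2) := A *m B - B *m A.

Lemma co_lbr10 (X Y : M) : co 1 0 (lbr X Y) =
  (co 0 0 X *m co 1 0 Y + co 1 0 X *m co 0 0 Y) - (co 0 0 Y *m co 1 0 X + co 1 0 Y *m co 0 0 X).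
Proof. by rewrite /lbr coB !co_mul !big_ord_recr !big_ord0 /= !add0r. Qed.
Lemma co_lbr01 (X Y : M) : co 0 1 (lbr X Y) =
  (co 0 0 X *m co 0 1 Y + co 0 1 X *m co 0 0 Y) - (co 0 0 Y *m co 0 1 X + co 0 1 Y *m co 0 0 X).
Proof. by rewrite /lbr coB !co_mul !big_ord_recr !big_ord0 /= !add0r. Qed.
Lemma co_lbr20 (X Y : M) : co 2 0 (lbr X Y) =
  (co 0 0 X *m co 2 0 Y + co 1 0 X *m co 1 0 Y + co 2 0 X *m co 0 0 Y)
  - (co 0 0 Y *m co 2 0 X + co 1 0 Y *m co 1 0 X + co 2 0 Y *m co 0 0 X).
Proof. by rewrite /lbr coB !co_mul !big_ord_recr !big_ord0 /= !add0r. Qed.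

Definition mk4 (a b c d : C) : 'M[C]_2 :=
  \matrix_(i, j) if i == 0 then (if j == 0 then a else b) else (if j == 0 then c else d).

Lemma mk4E (A : 'M[C]_2) : exists a b c d, A = mk4 a b c d.
Proof.
exists (A 0 0), (A 0 1), (A 1 0), (A 1 1); apply/matrixP => i j; rewrite !mxE.
by case: i => [[|[|]]] //= ?; case: j => [[|[|]]] //= ?; congr (A _ _); apply/val_inj.
Qed.
Lemma mk4E0 (A : 'M[C]_2) : \tr A = 0 -> exists a b c, A = mk4 a b c (- a).
Proof.
have [a [b [c [d ->]]]] := mk4E A.
rewrite /mxtrace big_ord_recr big_ord1 /= !mxE /= => h.
exists a, b, c; suff -> : d = - a by []. by apply/eqP; rewrite -addr_eq0 addrC h.
Qed.

Lemma mk4D a b c d a' b' c' d' : mk4 a b c d + mk4 a' b' c' d' = mk4 (a+a') (b+b') (c+c') (d+d').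
Proof. by apply/matrixP => i j; rewrite !mxE; case: (i == 0); case: (j == 0). Qed.
Lemma mk4N a b c d : - mk4 a b c d = mk4 (-a) (-b) (-c) (-d).
Proof. by apply/matrixP => i j; rewrite !mxE; case: (i == 0); case: (j == 0). Qed.
Lemma mk4Z k a b c d : k *: mk4 a b c d = mk4 (k*a) (k*b) (k*c) (k*d).
Proof. by apply/matrixP => i j; rewrite !mxE; case: (i == 0); case: (j == 0). Qed.
Lemma mk4M a b c d a' b' c' d' : mk4 a b c d *m mk4 a' b' c' d' =
  mk4 (a*a' + b*c') (a*b' + b*d') (c*a' + d*c') (c*b' + d*d').
Proof.
apply/matrixP => i j; rewrite !mxE big_ord_recr big_ord1 /= !mxE /=.
by case: (i == 0); case: (j == 0).
Qed.
Lemma tr_mk4 a b c d : \tr (mk4 a b c d) = a + d.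
Proof. by rewrite /mxtrace big_ord_recr big_ord1 /= !mxE. Qed.

Lemma co_tr p q (X : M) : in_sl2 X -> \tr (co p q X) = 0.
Proof.
rewrite /in_sl2 => h; transitivity (((\tr X)`_q)`_p); last by rewrite h !coef0.
by rewrite /mxtrace !coef_sum; apply eq_bigr => i _; rewrite mxE.
Qed.

Ltac gen4 := repeat match goal with |- context [co ?p ?q ?v] =>
  let a := fresh "a" in let b := fresh "b" in let c := fresh "c" in let d := fresh "d" in
  have [a [b [c [d ->]]]] := mk4E (co p q v) end.
Ltac gen3 := repeat match goal with H : in_sl2 ?v |- context [co ?p ?q ?v] =>
  let a := fresh "a" in let b := fresh "b" in let c := fresh "c" in
  have [a [b [c ->]]] := mk4E0 _ (co_tr p q v H) end.
Ltac norm4 := rewrite ?(mk4M, mk4D, mk4N, mk4Z); rewrite ?tr_mk4.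

Lemma cocyc (s : seq M) : size s = 3 -> CEd (@c_cochain R) s = 0.
Proof.
case: s => [|v0 [|v1 [|v2 [|v3 s]]]] //= _.
rewrite /CEd /=.
under eq_bigr do rewrite big_mkcond.
rewrite !big_ord_recl !big_ord0 /= /bump /= ?add0n ?add1n /=.
rewrite /drop2 /c_cochain /= !c2E ?co_lbr10 ?co_lbr01.
gen4. norm4. ring.
Qed.
Notation o4 k := (@Ordinal 4 k isT).
Lemma enumI4 : enum 'I_4 = [:: o4 0; o4 1; o4 2; o4 3].
Proof. by apply: (inj_map val_inj); rewrite val_enum_ord. Qed.
Lemma enumS (A : {set 'I_4}) : enum A = filter (mem A) [:: o4 0; o4 1; o4 2; o4 3].
Proof. by rewrite -enumI4 enumT. Qed.
Lemma sum_sets2 (F : {set 'I_4} -> C) : \sum_(I : {set 'I_4} | #|I| == 2) F I =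
  F [set o4 0; o4 1] + F [set o4 0; o4 2] + F [set o4 0; o4 3] + F [set o4 1; o4 2]
  + F [set o4 1; o4 3] + F [set o4 2; o4 3].
Proof.
pose h := fun p : 'I_4 * 'I_4 => [set p.1; p.2].
have E : [set I : {set 'I_4} | #|I| == 2] = h @: [set p : 'I_4 * 'I_4 | (p.1 < p.2)%N].
  apply/setP => I; rewrite inE; apply/idP/imsetP.
    move/cards2P => [x [y [xy ->]]].
    case: (ltngtP x y) => [lt|gt|eq].
    - by exists (x, y); rewrite // inE.
    - by exists (y, x); rewrite ?inE // /h /= setUC.
    - by move: xy; rewrite (val_inj eq) eqxx.
  case=> [[a b]]; rewrite inE /= => ab ->; apply/cards2P; exists a, b; split => //.
  by apply: contraTneq ab => ->; rewrite ltnn.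
have inj : {in [set p : 'I_4 * 'I_4 | (p.1 < p.2)%N] &, injective h}.
  move=> [a b] [c d]; rewrite !inE /= => ab cd /setP EE.
  have Ea : (a == c) || (a == d) by rewrite -in_set2 -EE in_set2 eqxx.
  have Eb : (b == c) || (b == d) by rewrite -in_set2 -EE in_set2 eqxx orbT.
  move: Ea Eb ab cd.
  case/orP=> /eqP Ea; case/orP=> /eqP Eb; subst => //; lia.
have -> : \sum_(I : {set 'I_4} | #|I| == 2) F I = \sum_(I in [set I : {set 'I_4} | #|I| == 2]) F I.
  by apply eq_bigl => I; rewrite inE.
rewrite E big_imset //.
have -> : \sum_(p in [set p : 'I_4 * 'I_4 | (p.1 < p.2)%N]) F (h p) = \sum_(p : 'I_4 * 'I_4 | (p.1 < p.2)%N) F (h p).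
  by apply eq_bigl => p; rewrite inE.
rewrite -(pair_big_dep xpredT (fun i j : 'I_4 => (i < j)%N) (fun i j => F (h (i, j)))) /=.
under eq_bigr do rewrite big_mkcond.
rewrite !big_ord_recl !big_ord0 /= /bump /= ?add0n ?add1n /= /h /=.
have e3 : lift ord0 (lift ord0 (lift ord0 ord0)) = o4 3 :> 'I_4 by apply/val_inj.
have e2 : lift ord0 (lift ord0 ord0) = o4 2 :> 'I_4 by apply/val_inj.
have e1 : lift ord0 ord0 = o4 1 :> 'I_4 by apply/val_inj.
have e0 : ord0 = o4 0 :> 'I_4 by apply/val_inj.
rewrite e3 e2 e1 e0.
by rewrite !add0r !addr0 !addrA.
Qed.
Definition f3 (A B D : 'M[C]_2) := \tr (A *m (B *m D - D *m B)).
Definition bco (s : seq M) : C :=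
  - (f3 (co 0 1 (nth 0 s 0)) (co 0 1 (nth 0 s 1)) (co 2 0 (nth 0 s 2))
   + f3 (co 0 1 (nth 0 s 0)) (co 2 0 (nth 0 s 1)) (co 0 1 (nth 0 s 2))
   + f3 (co 2 0 (nth 0 s 0)) (co 0 1 (nth 0 s 1)) (co 0 1 (nth 0 s 2))).

Lemma cup22 (a b : seq M -> C) v0 v1 v2 v3 : cup 2 2 a b [:: v0; v1; v2; v3] =
  a [:: v0; v1] * b [:: v2; v3] - a [:: v0; v2] * b [:: v1; v3] + a [:: v0; v3] * b [:: v1; v2]
  + a [:: v1; v2] * b [:: v0; v3] - a [:: v1; v3] * b [:: v0; v2] + a [:: v2; v3] * b [:: v0; v1].
Proof.
rewrite /cup sum_sets2 -!big_enum !enumS /= !inE /= !big_cons !big_nil /=.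
ring.
Qed.

Lemma CEd4 (b : seq M -> C) v0 v1 v2 v3 : CEd b [:: v0; v1; v2; v3] =
  - b [:: lbr v0 v1; v2; v3] + b [:: lbr v0 v2; v1; v3] - b [:: lbr v0 v3; v1; v2]
  - b [:: lbr v1 v2; v0; v3] + b [:: lbr v1 v3; v0; v2] - b [:: lbr v2 v3; v0; v1].
Proof.
rewrite /CEd /=.
under eq_bigr do rewrite big_mkcond.
rewrite !big_ord_recl !big_ord0 /= /bump /= ?add0n ?add1n /= /drop2 /=.
ring.
Qed.
Lemma ccE (X Y : M) : c_cochain [:: X; Y] = c2 X Y.
Proof. by []. Qed.
Lemma bcoE (X Y Z : M) : bco [:: X; Y; Z] =
  - (f3 (co 0 1 X) (co 0 1 Y) (co 2 0 Z) + f3 (co 0 1 X) (co 2 0 Y) (co 0 1 Z)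
     + f3 (co 2 0 X) (co 0 1 Y) (co 0 1 Z)).
Proof. by []. Qed.

Lemma cobound (s : seq M) : size s = 4 -> all_sl2 s ->
  cup 2 2 (@c_cochain R) (@c_cochain R) s = CEd bco s.
Proof.
case: s => [|v0 [|v1 [|v2 [|v3 [|v4 s]]]]] // _ H.
have Hv0 : in_sl2 v0 by exact: (H 0%N).
have Hv1 : in_sl2 v1 by exact: (H 1%N).
have Hv2 : in_sl2 v2 by exact: (H 2%N).
have Hv3 : in_sl2 v3 by exact: (H 3%N).
clear H.
rewrite cup22 CEd4 !ccE !bcoE !c2E /f3 !co_lbr20 !co_lbr01.
gen3. norm4. ring.
Qed.
Lemma c_is_cochain : is_cochain 2 (@c_cochain R).
Proof.
split.
  move=> s k a v w Hs _ Hk _ _.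
  case: s Hs => [|v0 [|v1 [|v2 s]]] // _.
  case: k Hk => [|[|k]] // _; rewrite /c_cochain /= !c2E !coD !co_cscale;
  gen4; norm4; ring.
move=> s i j Hs _ Hij Hj.
case: s Hs => [|v0 [|v1 [|v2 s]]] // _.
case: j Hij Hj => [|[|j]] //; case: i => [|i] // _ _ /= ->.
rewrite /c_cochain /= !c2E; gen4; norm4; ring.
Qed.

Lemma b_is_cochain : is_cochain 3 bco.
Proof.
split.
  move=> s k a v w Hs _ Hk _ _.
  case: s Hs => [|v0 [|v1 [|v2 [|v3 s]]]] // _.
  case: k Hk => [|[|[|k]]] // _; rewrite /bco /f3 /= !coD !co_cscale;
  gen4; norm4; ring.
move=> s i j Hs _ Hij Hj.
case: s Hs => [|v0 [|v1 [|v2 [|v3 s]]]] // _.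
case: j Hij Hj => [|[|[|j]]] //; case: i => [|[|i]] // _ _ /= ->;
rewrite /bco /f3 /=; gen4; norm4; ring.
Qed.
End H.

Theorem proposition3p6 (R : realType) :
  (* c is a 2-cochain *)
  is_cochain 2 (@c_cochain R) /\
  (* c is a 2-cocycle *)
  (forall s : seq 'M[{poly {poly CC R}}]_2,
      size s = 3 -> all_sl2 s -> CEd (@c_cochain R) s = 0) /\
  (* [c] \cup [c] = 0 in H^4: c \cup c is a coboundary *)
  (exists b : seq 'M[{poly {poly CC R}}]_2 -> CC R,
      is_cochain 3 b /\
      forall s : seq 'M[{poly {poly CC R}}]_2,
        size s = 4 -> all_sl2 s ->
        cup 2 2 (@c_cochain R) (@c_cochain R) s = CEd b s).
Proof.
split; first exact: c_is_cochain.
split; first by move=> s Hs _; exact: cocyc.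
exists (@bco R); split; first exact: b_is_cochain.
exact: cobound.
Qed.
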